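(* Let $n\geq 1$, $g\geq 1$, $r\geq 1$. Let $C_1,\dots,C_n\subset GL_r(\mathbb{C})$ be conjugacy classes whose collection of eigenvalues is multiplicatively generic and such that $\prod_{i=1}^n\det(C_i)=1$. If $g=1$, assume moreover that at least one of the partitions $P^i$ attached to $C_i$ is not the one-part partition $(r)$. Then there exist $A_k,B_k\in GL_r(\mathbb{C})$ ($k=1,\dots,g$) and $T_i\in C_i$ ($i=1,\dots,n$) such that $$\prod_{k=1}^g (A_k,B_k)\prod_{i=1}^n T_i=\mathrm{Id}_r,\qquad (A_k,B_k):=A_kB_kA_k^{-1}B_k^{-1},$$ and the matrices $A_1,\dots,A_g,B_1,\dots,B_g,T_1,\dots,T_n$ have no common invariant subspace other than $0$ and $\mathbb{C}^r$.
   Context: Partitions: a partition $P=(m_1\geq\dots\geq m_\ell>0)$ of $r$ has conjugate $\widehat P=(n_1,\dots,n_{m_1})$, $n_j=\#\{k:m_k\ge j\}$; the union $P\cup Q$ collects all parts of $P$ and $Q$ in non-increasing order. Partition attached to a conjugacy class $C\subset GL_r(\mathbb{C})$ with distinct eigenvalues $\lambda_1,\dots,\lambda_e$: let $P^{\lambda_j}$ record the sizes of the Jordan blocks of eigenvalue $\lambda_j$; set $P:=\widehat{P}^{\lambda_1}\cup\dots\cup\widehat{P}^{\lambda_e}$. Write $P^i$ for the partition attached to $C_i$. Multiplicative genericity: list the eigenvalues of $C_i$ with multiplicity as $\lambda_{i,1},\dots,\lambda_{i,r}$; the collection is multiplicatively generic if for every $1\le m<r$ and all subsets $\Lambda_1,\dots,\Lambda_n\subset\{1,\dots,r\}$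 of size $m$, $\prod_{i}\prod_{k\in\Lambda_i}\lambda_{i,k}\neq1$. *)

(* Defs.v *)
From HB Require Import structures.
From mathcomp Require Import all_boot all_order all_algebra.
From mathcomp Require Import reals.
From mathcomp Require Import complex.
Set Implicit Arguments. Unset Strict Implicit. Unset Printing Implicit Defensive.
Import Order.TTheory GRing.Theory Num.Theory.
Local Open Scope ring_scope.

Section Defs.
Variable F : fieldType.

Definition eigen_listing (r : nat) (M : 'M[F]_r) (s : seq F) : Prop :=
  char_poly M = \prod_(x <- s) ('X - x%:P).

Definition mult_generic (n r : nat) (M : 'I_n -> 'M[F]_r) : Prop :=
  forall lam : 'I_n -> r.-tuple F,
    (forall i, eigen_listing (M i) (lam i)) ->
    forall m : nat, (1 <= m < r)%N ->
    forall L : 'I_n -> {set 'I_r}, (forall i, #|L i| = m) ->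
      \prod_(i < n) \prod_(k in L i) tnth (lam i) k != 1.

(* Conjugate of the Jordan-type partition P^lambda of M at eigenvalue a:
   its j-th part is the number of Jordan blocks of size >= j, i.e.
   rank (M - a)^(j-1) - rank (M - a)^j. *)
Definition conj_jordan_part (r : nat) (M : 'M[F]_r) (a : F) : seq nat :=
  [seq x <- [seq (\rank ((M - a%:M) ^+ j.-1) - \rank ((M - a%:M) ^+ j))%N
             | j <- iota 1 r] | (0 < x)%N].

Definition attached_partition (r : nat) (M : 'M[F]_r) (s : seq F) : seq nat :=
  sort geq (flatten [seq conj_jordan_part M a | a <- undup s]).

Definition in_class (r : nat) (M T : 'M[F]_r) : Prop :=
  exists2 P : 'M[F]_r, P \in unitmx & T = P *m M *m invmx P.

Definition commutatorm (r : nat) (A B : 'M[F]_r) : 'M[F]_r :=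
  A *m B *m invmx A *m invmx B.

(* W (the column space spanned by the transposed rows of U) is invariant
   under the column action v |-> X v. *)
Definition col_invariant (r : nat) (U X : 'M[F]_r) : bool :=
  (U *m X^T <= U)%MS.

End Defs.

(* Main.v *)
Require Import Defs.
From HB Require Import structures.
From mathcomp Require Import all_boot all_order all_algebra.
From mathcomp Require Import reals.
From mathcomp Require Import complex.
Import Order.TTheory GRing.Theory Num.Theory.
From mathcomp Require Import perm ring.
Set Implicit Arguments. Unset Strict Implicit. Unset Printing Implicit Defensive.
Local Open Scope ring_scope.
Section Gen.
Variable C : fieldType.

Lemma char_poly_conj n (P A : 'M[C]_n) : P \in unitmx ->
  char_poly (P *m A *m invmx P) = char_poly A.
Proof.
move=> Pu; rewrite /char_poly /char_poly_mx.
set pP := map_mx polyC P; set pQ := map_mx polyC (invmx P).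
have H : 'X%:M - map_mx polyC (P *m A *m invmx P) = pP *m ('X%:M - map_mx polyC A) *m pQ.
  rewrite !map_mxM mulmxBr mulmxBl -!mulmxA; congr (_ - _).
  by rewrite mulmxA scalar_mxC -mulmxA /pP /pQ -map_mxM mulmxV // map_mx1 mulmx1.
rewrite H !det_mulmx /pP /pQ !det_map_mx mulrC mulrA -rmorphM.
by rewrite -det_mulmx mulVmx // det1 rmorph1 mul1r.
Qed.

Lemma char_poly_tr n (A : 'M[C]_n) : char_poly A^T = char_poly A.
Proof.
rewrite /char_poly /char_poly_mx -[RHS]det_tr; congr (\det _).
by rewrite linearB /= tr_scalar_mx map_trmx.
Qed.

Lemma char_poly_lblock d e (Y : 'M[C]_d) (Cc : 'M[C]_(e, d)) (Z : 'M[C]_e) :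
  char_poly (block_mx Y 0 Cc Z) = char_poly Y * char_poly Z.
Proof.
rewrite /char_poly /char_poly_mx map_block_mx (scalar_mx_block d e).
by rewrite opp_block_mx add_block_mx map_mx0 oppr0 addr0 det_lblock.
Qed.


Lemma trig_mulmx n (A B : 'M[C]_n) : is_trig_mx A -> is_trig_mx B ->
  is_trig_mx (A *m B) /\ forall i, (A *m B) i i = A i i * B i i.
Proof.
move=> /is_trig_mxP tA /is_trig_mxP tB; split.
  apply/is_trig_mxP => i j lij; rewrite mxE big1 // => k _.
  case: (ltnP i k) => [lik|lki]; first by rewrite tA // mul0r.
  by rewrite tB ?mulr0 // (leq_ltn_trans lki lij).
move=> i; rewrite mxE (bigD1 i) //= big1 ?addr0 // => k nki.
case: (ltngtP i k) => [lik|lki|eik]; first by rewrite tA // mul0r.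
  by rewrite tB ?mulr0.
by move: nki; rewrite (val_inj eik) eqxx.
Qed.



Lemma prod_seqN (s : seq C) : \prod_(x <- s) (- x) = (-1) ^+ size s * \prod_(x <- s) x.
Proof.
elim: s => [|a s IH]; first by rewrite !big_nil mul1r.
by rewrite !big_cons IH /= exprS -mulN1r; ring.
Qed.

Lemma det_listing n (A : 'M[C]_n) (s : seq C) :
  char_poly A = \prod_(x <- s) ('X - x%:P) -> \det A = \prod_(x <- s) x.
Proof.
move=> H.
have sz : size s = n.
  by have := size_char_poly A; rewrite H size_prod_XsubC => -[].
have := char_poly_det A; rewrite H -horner_coef0 horner_prod.
under eq_bigr do rewrite hornerXsubC add0r.
have s0 : ((-1 : C) ^+ n != 0) by rewrite expf_neq0 // oppr_eq0 oner_eq0.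
rewrite prod_seqN sz => h; symmetry; exact: (mulfI s0).
Qed.
End Gen.

Section Closed.
Variable C : numClosedFieldType.

Lemma char_poly_split n (A : 'M[C]_n) :
  exists s : seq C, char_poly A = \prod_(x <- s) ('X - x%:P) /\ size s = n.
Proof.
have [s Hs] := closed_field_poly_normal (char_poly A).
move: Hs; rewrite (monicP (char_poly_monic A)) scale1r => Hs.
exists s; split => //.
by have := size_char_poly A; rewrite Hs size_prod_XsubC => -[].
Qed.

End Closed.
Section Irr.
Variable C : numClosedFieldType.
Variables d e : nat.
Local Notation N := (d + e)%N.
Variable U : 'M[C]_N.
Hypothesis rU : \rank U = d.

Let P := row_ebase U.
Let W : 'M[C]_(d, N) := usubmx P.
Let Q := invmx P.
Let Pu : P \in unitmx. Proof. exact: row_ebase_unit. Qed.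

Lemma eqUW : (U :=: W)%MS.
Proof.
have UW : (U <= W)%MS.
  rewrite -[U]mulmx_ebase rU -mulmxA (@pid_mx_block _ e e d) -[row_ebase U]vsubmxK.
  rewrite mul_block_col !mul0mx mul1mx !addr0.
  apply: submx_trans (submxMl _ _) _.
  by rewrite col_mx_sub submx_refl sub0mx.
apply/eqmxP; have := mxrank_leqif_eq UW.
move=> /leqifP; case: ifP => // _; rewrite rU => H.
by have := leq_ltn_trans (rank_leq_row W) H; rewrite ltnn.
Qed.

Definition inv (X : 'M[C]_N) := (W *m X^T <= W)%MS.

Lemma invE X : col_invariant U X = inv X.
Proof. by rewrite /col_invariant /inv (eqmxMr _ eqUW) eqUW. Qed.

Lemma inv1 : inv 1%:M.
Proof. by rewrite /inv trmx1 mulmx1 submx_refl. Qed.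

Lemma invM X Z : inv X -> inv Z -> inv (X *m Z).
Proof.
rewrite /inv trmx_mul => hX hZ; rewrite mulmxA.
exact: submx_trans (submxMr _ hZ) hX.
Qed.

Lemma invV X : X \in unitmx -> inv X -> inv (invmx X).
Proof.
move=> Xu hX.
have Tu : X^T \in unitmx by rewrite unitmx_tr.
have eq1 : (W *m X^T :=: W)%MS.
  apply/eqmxP; have := mxrank_leqif_eq hX; rewrite mxrankMfree ?row_free_unit //.
  by move=> [_ <-].
have sub : (W <= W *m X^T)%MS by rewrite eq1.
rewrite /inv trmx_inv; have := submxMr (invmx X^T) sub.
by rewrite -mulmxA mulmxV // mulmx1.
Qed.

Definition phi X := P *m X^T *m Q.

Lemma WQr : W *m rsubmx Q = 0.
Proof.
have := mulmxV Pu; rewrite -/Q -[P]vsubmxK -[Q]hsubmxK mul_col_row.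
rewrite (scalar_mx_block d e) => /eq_block_mx [_ H _ _].
by rewrite row_mxKr; exact: H.
Qed.

Lemma phi_ur X : inv X -> ursubmx (phi X) = 0.
Proof.
move=> /submxP [K HK].
rewrite /phi -[P]vsubmxK -[Q]hsubmxK !mul_col_mx /ursubmx col_mxKu mul_mx_row row_mxKr.
by rewrite -/W HK -mulmxA WQr mulmx0.
Qed.

Lemma phiM X Z : phi (X *m Z) = phi Z *m phi X.
Proof.
by rewrite /phi trmx_mul !mulmxA mulmxKV //.
Qed.

Definition f X := \det (ulsubmx (phi X)).

Lemma ul_mul (A B : 'M[C]_N) : ursubmx A = 0 ->
  ulsubmx (A *m B) = ulsubmx A *m ulsubmx B.
Proof.
move=> H; rewrite -{1}[A]submxK -{1}[B]submxK mulmx_block block_mxKul H mul0mx addr0.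
by [].
Qed.

Lemma fM X Z : inv Z -> f (X *m Z) = f X * f Z.
Proof.
by move=> hZ; rewrite /f phiM ul_mul ?phi_ur // det_mulmx mulrC.
Qed.

Lemma f1 : f 1%:M = 1.
Proof.
rewrite /f /phi trmx1 mulmx1 mulmxV // (scalar_mx_block d e) block_mxKul.
exact: det1.
Qed.

Lemma f_big m (F : 'I_m -> 'M[C]_N) : (forall k, inv (F k)) ->
  inv (\big[mulmx/1%:M]_(k < m) F k) /\ f (\big[mulmx/1%:M]_(k < m) F k) = \prod_(k < m) f (F k).
Proof.
move=> hF; elim: m F hF => [|m IH] F hF.
  by rewrite !big_ord0 f1; split => //; exact: inv1.
rewrite !big_ord_recl /=; have [h1 h2] := IH (fun k => F (lift ord0 k)) (fun k => hF _).
split; first by apply: invM; [exact: hF | exact: h1].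
by rewrite fM ?h2.
Qed.

Lemma f_comm A B : A \in unitmx -> B \in unitmx -> inv A -> inv B ->
  inv (commutatorm A B) /\ f (commutatorm A B) = 1.
Proof.
move=> Au Bu hA hB.
have hA' := invV Au hA; have hB' := invV Bu hB.
rewrite /commutatorm; split.
  apply: invM => //; apply: invM => //; exact: invM.
rewrite fM // fM // fM //.
have fA : f A * f (invmx A) = 1 by rewrite -fM // mulmxV // f1.
have fB : f B * f (invmx B) = 1 by rewrite -fM // mulmxV // f1.
transitivity ((f A * f (invmx A)) * (f B * f (invmx B))); first by ring.
by rewrite fA fB mulr1.
Qed.

Definition Ld : {set 'I_N} := [set k : 'I_N | (k < d)%N].

Lemma card_Ld : #|Ld| = d.
Proof.
rewrite -sum1_card big_split_ord /= /Ld.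
under eq_bigl do rewrite inE /= ltn_ord.
under [X in (_ + X)%N]eq_bigl do rewrite inE /= ltnNge leq_addr.
by rewrite [X in (_ + X)%N]big_pred0 // addn0 sum1_card card_ord.
Qed.

Lemma f_listing X M0 : inv X -> in_class M0 X ->
  exists t : N.-tuple C, eigen_listing M0 t /\ \prod_(k in Ld) tnth t k = f X.
Proof.
move=> hX [P' P'u eX].
have cpX : char_poly M0 = char_poly (ulsubmx (phi X)) * char_poly (drsubmx (phi X)).
  rewrite -(char_poly_conj M0 P'u) -eX -char_poly_tr -(char_poly_conj _ Pu) -/Q -/(phi _).
  by rewrite -{1}[phi X]submxK phi_ur // char_poly_lblock.
have [sY [HY sYs]] := char_poly_split (ulsubmx (phi X)).
have [sZ [HZ sZs]] := char_poly_split (drsubmx (phi X)).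
have Hs : size (sY ++ sZ) == N by rewrite size_cat sYs sZs.
exists (Tuple Hs); split.
  by rewrite /eigen_listing cpX /= big_cat HY HZ.
rewrite /f (det_listing HY).
rewrite big_mkcond big_split_ord /=.
rewrite [X in _ * X]big1 ?mulr1; last by move=> i _; rewrite /Ld inE /= ltnNge leq_addr.
rewrite (big_nth 0) sYs big_mkord; apply: eq_bigr => i _.
by rewrite /Ld inE /= ltn_ord (tnth_nth 0) /= nth_cat sYs ltn_ord.
Qed.

Theorem irr_core n g (M T : 'I_n -> 'M[C]_N) (A B : 'I_g -> 'M[C]_N) :
  (0 < d)%N -> (0 < e)%N -> mult_generic M -> (forall i, in_class (M i) (T i)) ->
  (forall k, A k \in unitmx) -> (forall k, B k \in unitmx) ->
  (\big[mulmx/1%:M]_(k < g) commutatorm (A k) (B k)) *m (\big[mulmx/1%:M]_(i < n) T i) = 1%:M ->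
  (forall k, col_invariant U (A k)) -> (forall k, col_invariant U (B k)) ->
  (forall i, col_invariant U (T i)) -> False.
Proof.
move=> d0 e0 gen cl Au Bu E iA iB iT.
have iA' k : inv (A k) by rewrite -invE.
have iB' k : inv (B k) by rewrite -invE.
have iT' i : inv (T i) by rewrite -invE.
have hc k := f_comm (Au k) (Bu k) (iA' k) (iB' k).
have [iC fC] := @f_big g (fun k => commutatorm (A k) (B k)) (fun k => (hc k).1).
have [iTT fT] := @f_big n T iT'.
have H1 := f1; rewrite -E fM // fT fC big1 ?mul1r in H1; last by move=> k _; exact: (hc k).2.
have /fin_all_exists [lam Hlam] : forall i, exists t : N.-tuple C,
    eigen_listing (M i) t /\ \prod_(k in Ld) tnth t k = f (T i).
  by move=> i; exact: f_listing (iT' i) (cl i).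
have dN : (1 <= d < N)%N by rewrite d0 /= -{1}(addn0 d) ltn_add2l.
have := gen lam (fun i => (Hlam i).1) d dN (fun _ => Ld) (fun _ => card_Ld).
under eq_bigr do rewrite (Hlam _).2.
by rewrite H1 eqxx.
Qed.

End Irr.

Lemma irr_gen (C : numClosedFieldType) r n g (M T : 'I_n -> 'M[C]_r) (A B : 'I_g -> 'M[C]_r) :
  mult_generic M -> (forall i, in_class (M i) (T i)) ->
  (forall k, A k \in unitmx) -> (forall k, B k \in unitmx) ->
  (\big[mulmx/1%:M]_(k < g) commutatorm (A k) (B k)) *m (\big[mulmx/1%:M]_(i < n) T i) = 1%:M ->
  forall U : 'M[C]_r,
  (forall k, col_invariant U (A k)) -> (forall k, col_invariant U (B k)) ->
  (forall i, col_invariant U (T i)) -> (\rank U == 0)%N || (\rank U == r).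
Proof.
move=> gen cl Au Bu E U iA iB iT.
case/boolP: (\rank U == 0)%N => //= r0.
apply/negPn/negP => rr.
have [d Hd] : exists d, \rank U = d by eexists.
have [e er] : exists e, r = (d + e)%N.
  by exists (r - d)%N; rewrite subnKC // -Hd rank_leq_col.
subst r.
have d0 : (0 < d)%N by rewrite lt0n -Hd.
have e0 : (0 < e)%N by rewrite lt0n; apply: contra rr => /eqP e0; rewrite Hd e0 addn0.
exact: (irr_core Hd d0 e0 gen cl Au Bu E iA iB iT).
Qed.

Section Exist.
Variable C : numClosedFieldType.
Variable r' : nat.
Local Notation r := r'.+1.

Lemma big_trig m (T : 'I_m -> 'M[C]_r) : (forall i, is_trig_mx (T i)) ->
  is_trig_mx (\big[mulmx/1%:M]_(i < m) T i) /\
  forall k, (\big[mulmx/1%:M]_(i < m) T i) k k = \prod_(i < m) T i k k.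
Proof.
elim: m T => [|m IH] T hT.
  rewrite big_ord0; split; first exact: scalar_mx_is_trig.
  by move=> k; rewrite big_ord0 mxE eqxx.
have [h1 h2] := IH (fun k => T (lift ord0 k)) (fun k => hT _).
have [t1 t2] := trig_mulmx (hT ord0) h1.
rewrite big_ord_recl; split => // k.
by rewrite t2 h2 big_ord_recl.
Qed.

Lemma det_big m (T : 'I_m -> 'M[C]_r) :
  \det (\big[mulmx/1%:M]_(i < m) T i) = \prod_(i < m) \det (T i).
Proof.
elim: m T => [|m IH] T; first by rewrite !big_ord0 det1.
by rewrite !big_ord_recl det_mulmx IH.
Qed.

Lemma big_mulmx1 m (F : 'I_m -> 'M[C]_r) : (forall k, F k = 1%:M) ->
  \big[mulmx/1%:M]_(k < m) F k = 1%:M.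
Proof.
elim: m F => [|m IH] F hF; first by rewrite big_ord0.
by rewrite big_ord_recl hF IH ?mul1mx.
Qed.

Lemma inv_eq (A B : 'M[C]_r) : A *m B = 1%:M -> invmx A = B.
Proof.
move=> AB; have [Au _] := mulmx1_unit AB.
by rewrite -[invmx A]mulmx1 -AB mulmxA mulVmx // mul1mx.
Qed.

End Exist.

Lemma exist_part (C : numClosedFieldType) r' n g' (M : 'I_n -> 'M[C]_r'.+1) :
  (forall i, M i \in unitmx) -> mult_generic M -> \prod_(i < n) \det (M i) = 1 ->
  exists (A B : 'I_g'.+1 -> 'M[C]_r'.+1) (T : 'I_n -> 'M[C]_r'.+1),
    [/\ (forall k, A k \in unitmx), (forall k, B k \in unitmx),
        (forall i, in_class (M i) (T i)) &
        (\big[mulmx/1%:M]_(k < g'.+1) commutatorm (A k) (B k))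
          *m (\big[mulmx/1%:M]_(i < n) T i) = 1%:M].
Proof.
set r := r'.+1.
move=> Mu gen dM.
have /fin_all_exists [P HP] : forall i, exists P : 'M[C]_r,
    (P \in unitmx) && is_trig_mx (P *m M i *m invmx P).
  move=> i; have [P Pu tP] := Schur (M i) (ltn0Sn r'); exists P.
  by rewrite unitarymx_unit //= -conjumx ?unitarymx_unit.
pose T i := P i *m M i *m invmx (P i).
have Pu i : P i \in unitmx by case/andP: (HP i).
have Tt i : is_trig_mx (T i) by case/andP: (HP i).
have cl i : in_class (M i) (T i) by exists (P i).
pose Y := \big[mulmx/1%:M]_(i < n) T i.
have [tY dY] := big_trig Tt.
pose x (k : 'I_r) := Y k k.
have detY : \det Y = 1.
  rewrite /Y det_big -[RHS]dM; apply: eq_bigr => i _.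
  rewrite /T !det_mulmx det_inv mulrC mulrA mulVf ?mul1r //.
  by rewrite -unitfE -unitmxE.
have prodx : \prod_k x k = 1 by rewrite -(det_trig tY).
have cpT i : char_poly (M i) = \prod_(k < r) ('X - (T i k k)%:P).
  by rewrite -(char_poly_conj (M i) (Pu i)) -/(T i) (char_poly_trig (Tt i)).
have genS (S : {set 'I_r}) : S != set0 -> S != setT -> \prod_(k in S) x k != 1.
  move=> S0 ST.
  pose lam i := [tuple T i k k | k < r].
  have Hl i : eigen_listing (M i) (lam i).
    by rewrite /eigen_listing cpT big_tuple; apply: eq_bigr => k _; rewrite tnth_mktuple.
  have cS : (1 <= #|S| < r)%N.
    have pS : S \proper setT by rewrite properT.
    rewrite card_gt0 S0 /=; have := proper_card pS.
    by rewrite cardsT card_ord.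
  have := gen lam Hl #|S| cS (fun _ => S) (fun _ => erefl).
  apply: contra => /eqP E; apply/eqP; rewrite -[RHS]E exchange_big /=; apply: eq_bigr => k _.
  by rewrite /x dY; apply: eq_bigr => i _; rewrite tnth_mktuple.
have x0 k : x k != 0.
  apply/eqP => h; move: prodx; rewrite (bigD1 k) //= h mul0r => /eqP.
  by rewrite eq_sym oner_eq0.
pose p (j : 'I_r) := \prod_(k < r | (k < j)%N) x k.
have p0 j : p j != 0 by apply/prodf_neq0 => k _.
have pk k : x k * p k = \prod_(i < r | (i < k.+1)%N) x i.
  rewrite [RHS](bigD1 k) ?ltnSn //=; congr (_ * _); apply: eq_bigl => i.
  by rewrite ltnS ltn_neqAle andbC.
have pS k : x k * p k = p (ordS k).
  rewrite pk /p /=; case: (ltnP k.+1 r) => hk.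
    by rewrite modn_small.
  have ek : k.+1 = r by apply/eqP; rewrite eqn_leq hk ltn_ord.
  rewrite ek modnn [RHS]big_pred0 // -[in RHS]prodx; apply: eq_bigl => i.
  by rewrite ltn_ord.
have pneq (j l : 'I_r) : (j < l)%N -> p j != p l.
  move=> jl; pose S := [set k : 'I_r | (j <= k < l)%N].
  have pl : p l = p j * \prod_(k in S) x k.
    rewrite /p (bigID (fun k : 'I_r => (k < j)%N)) /=; congr (_ * _).
      apply: eq_bigl => k; apply: andb_idl => kj; exact: ltn_trans kj jl.
    by apply: eq_bigl => k; rewrite inE -leqNgt andbC.
  have S0 : S != set0 by apply/set0Pn; exists j; rewrite inE leqnn jl.
  have ST : S != setT.
    apply/negP => /eqP ST; case: (posnP j) => [j0|jpos].
      have := in_setT (@ord_max r'); rewrite -ST inE /= => /andP[_].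
      by rewrite ltnNge -ltnS ltn_ord.
    by have := in_setT (@ord0 r'); rewrite -ST inE /= leqNgt jpos.
  apply: contra (genS S S0 ST) => /eqP pjl; apply/eqP.
  by apply: (mulfI (p0 j)); rewrite -pl -pjl mulr1.
have pinj : injective p.
  move=> j l; case: (ltngtP j l) => h.
  - by move/eqP; rewrite (negPf (pneq _ _ h)).
  - by move/esym/eqP; rewrite (negPf (pneq _ _ h)).
  - by move=> _; apply: val_inj.
pose D := diag_mx (\row_k p k).
have Du : D \in unitmx.
  rewrite unitmxE det_diag unitfE; apply/prodf_neq0 => k _; rewrite mxE; exact: p0.
pose Z := Y *m D.
have [tZ dZ] := trig_mulmx tY (diag_mx_is_trig (\row_k p k)).
have cpZ : char_poly Z = \prod_(k < r) ('X - (p k)%:P).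
  rewrite (char_poly_trig tZ) [RHS](reindex_inj (@ordS_inj r)) /=.
  apply: eq_bigr => k _; rewrite dZ -pS !mxE eqxx mulr1n //.
pose tp := [tuple p k | k < r].
have utp : uniq tp.
  by apply/tuple_uniqP => j l; rewrite !tnth_mktuple; apply: pinj.
have cpZt : char_poly Z = \prod_(y <- tp) ('X - y%:P).
  by rewrite cpZ big_tuple; apply: eq_bigr => k _; rewrite tnth_mktuple.
have [P0 P0u sd] : exists2 P0 : 'M[C]_r, P0 \in unitmx & similar_diag P0 Z.
  apply/(diagonalizableP Z); exists tp => //.
  by rewrite -cpZt mxminpoly_dvd_char.
have /(similar_diagLR P0u) [D' eZ] := sd.
rewrite conjumx ?unitmx_inv // invmxK in eZ.
pose tD := [tuple D' 0 k | k < r].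
have cpD : char_poly Z = \prod_(y <- tD) ('X - y%:P).
  have P0u' : invmx P0 \in unitmx by rewrite unitmx_inv.
  rewrite eZ -[X in _ *m X]invmxK (char_poly_conj _ P0u') char_poly_trig ?diag_mx_is_trig //.
  by rewrite big_tuple; apply: eq_bigr => k _; rewrite tnth_mktuple !mxE eqxx mulr1n.
have /tuple_permP [s Hs] : perm_eq tD tp by apply: prod_XsubC_eq; rewrite -cpD -cpZt.
have Ds k : D' 0 k = p (s k).
  have Ht : tD = [tuple tnth tp (s i) | i < r] by apply: val_inj.
  by have := congr1 (fun t => tnth t k) Ht; rewrite /= !tnth_mktuple.
pose Q : 'M[C]_r := perm_mx s.
pose Q' : 'M[C]_r := perm_mx s^-1.
have QQ : Q *m Q' = 1%:M by rewrite -perm_mxM mulgV perm_mx1.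
have diagD : diag_mx D' = Q *m D *m Q'.
  apply/matrixP => i j.
  rewrite -row_permE -col_permE !mxE Ds (inj_eq perm_inj) //.
pose B0 := invmx P0 *m Q.
have iB0 : invmx B0 = Q' *m P0.
  apply: inv_eq; rewrite /B0 -mulmxA [Q *m _]mulmxA QQ mul1mx mulVmx //.
have B0u : B0 \in unitmx.
  by rewrite /B0 unitmx_mul unitmx_inv P0u unitmx_perm.
have key : Y *m D = B0 *m D *m invmx B0.
  rewrite -/Z eZ diagD iB0 /B0 !mulmxA //.
have eY : Y = B0 *m D *m invmx B0 *m invmx D by rewrite -key mulmxK.
clearbody B0 D.
exists (fun k => if k == ord0 then D else 1%:M), (fun k => if k == ord0 then B0 else 1%:M), T.
split => //.
- by move=> k; case: ifP => _; rewrite ?unitmx1.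
- by move=> k; case: ifP => _; rewrite ?unitmx1.
rewrite big_ord_recl eqxx big_mulmx1; last first.
  by move=> k; rewrite eq_sym (negPf (neq_lift _ _)) /commutatorm invmx1 !mulmx1.
rewrite mulmx1 -/Y eY /commutatorm !mulmxA mulmxKV // mulmxKV // mulmxK // mulmxV //.
Qed.

Unset Implicit Arguments.

Theorem mainTheorem2 (R : realType) (n g r : nat) (M : 'I_n -> 'M[R[i]]_r) :
  (1 <= n)%N -> (1 <= g)%N -> (1 <= r)%N ->
  (forall i, M i \in unitmx) ->
  mult_generic M ->
  \prod_(i < n) \det (M i) = 1 ->
  (g = 1%N -> exists i : 'I_n, forall s, eigen_listing (M i) s ->
                attached_partition (M i) s != [:: r]) ->
  exists (A B : 'I_g -> 'M[R[i]]_r) (T : 'I_n -> 'M[R[i]]_r),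
    [/\ (forall k, A k \in unitmx), (forall k, B k \in unitmx),
        (forall i, in_class (M i) (T i)),
        (\big[mulmx/1%:M]_(k < g) commutatorm (A k) (B k))
          *m (\big[mulmx/1%:M]_(i < n) T i) = 1%:M
      & forall U : 'M[R[i]]_r,
          (forall k, col_invariant U (A k)) ->
          (forall k, col_invariant U (B k)) ->
          (forall i, col_invariant U (T i)) ->
          (\rank U == 0)%N || (\rank U == r)].
Proof.
move=> n1 g1 r1 Mu gen dM _.
case: r => [|r'] in M Mu gen dM r1 *; first by [].
case: g => [|g'] in g1 *; first by [].
have [A [B [T [Au Bu cl E]]]] := @exist_part _ r' n g' M Mu gen dM.
exists A, B, T; split => //.
exact: irr_gen gen cl Au Bu E.
Qed.
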